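(* Let $\nu$ be an antinorm on $\mathbb{R}^n$ and $U_\nu=\{\xi\in\mathbb{R}^n:\nu(\xi)\ge1\}$. Then (1) $U_\nu$ is a nonempty closed convex set; (2) $\lambda U_\nu\subset U_\nu$ for every $\lambda\ge1$; (3) $0\notin U_\nu$. Conversely, if $U\subset\mathbb{R}^n$ satisfies (1)–(3), then $\nu_U=\operatorname{cl}\mathring\nu_U$, where $\mathring\nu_U(\xi)=\sup\{\lambda>0:\xi\in\lambda U\}$ (with $\sup\varnothing=-\infty$), is an antinorm. Moreover, the maps $\nu\mapsto U_\nu$ and $U\mapsto\nu_U$ are mutually inverse: $\nu_{U_\nu}=\nu$ and $U_{\nu_U}=U$.
   Context: An antinorm on $\mathbb{R}^n$ is a function $\nu:\mathbb{R}^n\to\mathbb{R}\cup\{-\infty\}$ such that: $\nu$ is concave and closed (its hypograph is closed, i.e. $\nu$ is upper semicontinuous); $\nu(\lambda\xi)=\lambda\nu(\xi)$ for all $\lambda\ge0$, $\xi\in\mathbb{R}^n$; $\operatorname{dom}\nu=\{\xi:\nu(\xi)\neq-\infty\}\neq\varnothing$ and $\nu(\xi)>0$ for every $\xi$ in the relative interior of $\operatorname{dom}\nu$. For a concave function $g$, $\operatorname{cl}g$ denotes its closure, $(\operatorname{cl}g)(\xi)=\limsup_{\eta\to\xi}g(\eta)$. *)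

(* Defs.v *)
From mathcomp Require Import all_boot all_order all_algebra.
From mathcomp Require Import all_classical all_reals all_analysis.
Set Implicit Arguments. Unset Strict Implicit. Unset Printing Implicit Defensive.
Import Order.TTheory GRing.Theory Num.Theory.
Import numFieldNormedType.Exports.
Local Open Scope classical_set_scope.
Local Open Scope ring_scope.

Section Antinorm.
Variables (R : realType) (n : nat).
Local Notation V := 'rV[R]_n.

Definition hypo (nu : V -> \bar R) : set (V * R) :=
  [set p | (p.2%:E <= nu p.1)%E].

(* concave = hypograph is convex (written out) *)
Definition concave_fun (nu : V -> \bar R) : Prop :=
  forall (x y : V) (a b t : R), 0 <= t <= 1 ->
    (a%:E <= nu x)%E -> (b%:E <= nu y)%E ->
    ((t * a + (1 - t) * b)%:E <= nu (t *: x + (1 - t) *: y)%R)%E.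

Definition dom (nu : V -> \bar R) : set V := [set x | nu x != -oo%E].

Definition aff_hull (C : set V) : set V :=
  [set y | exists (k : nat) (p : 'I_k -> V) (w : 'I_k -> R),
     (forall i, C (p i)) /\ \sum_(i < k) w i = 1 /\
     y = \sum_(i < k) w i *: p i].

Definition rel_int (C : set V) : set V :=
  [set x | C x /\ exists2 e : R, 0 < e &
     forall y, aff_hull C y -> ball x e y -> C y].

Definition antinorm (nu : V -> \bar R) : Prop :=
  (forall x, nu x != +oo%E) /\
  [/\ concave_fun nu,
      closed (hypo nu),
      (forall (l : R) x, 0 <= l -> nu (l *: x)%R = (l%:E * nu x)%E),
      dom nu !=set0 &
      forall x, rel_int (dom nu) x -> (0 < nu x)%E].

Definition Uof (nu : V -> \bar R) : set V := [set x | (1 <= nu x)%E].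

(* the gauge-like function  sup {l > 0 : x \in l U},  sup of empty = -oo *)
Definition nu_ring (U : set V) (x : V) : \bar R :=
  ereal_sup [set l%:E | l in [set l : R | 0 < l /\ exists2 u, U u & x = l *: u]].

(* closure (upper semicontinuous hull): (cl g)(x) = limsup_{y -> x} g y *)
Definition clf (g : V -> \bar R) (x : V) : \bar R := limf_esup g (nbhs x).

Definition nuof (U : set V) : V -> \bar R := clf (nu_ring U).

Definition convex_setV (U : set V) : Prop :=
  convex_set (U : set (convex_lmodType V)).

Definition antinorm_set (U : set V) : Prop :=
  [/\ U !=set0, closed U, convex_setV U,
      (forall (l : R) u, 1 <= l -> U u -> U (l *: u)) & ~ U 0].

End Antinorm.

(* Main.v *)
Require Import Defs.
From mathcomp Require Import all_boot all_order all_algebra.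
From mathcomp Require Import all_classical all_reals all_analysis.
From mathcomp Require Import ring lra.
Import Order.TTheory GRing.Theory Num.Theory.
Import numFieldNormedType.Exports.
Local Open Scope classical_set_scope.
Local Open Scope ring_scope.
Set Implicit Arguments. Unset Strict Implicit.
Section A.
Variables (R : realType) (n : nat).
Local Notation V := 'rV[R]_n.

Lemma ballE (x y : V) e : ball x e y <-> `|x - y| < e.
Proof. by rewrite -ball_normE. Qed.

Lemma lee_real (a b : \bar R) : (forall c : R, (c%:E < a)%E -> (c%:E <= b)%E) -> (a <= b)%E.
Proof.
move=> H; case: b H => [b| |] H; last 1 first.
- case: a H => [a| |] H; last by rewrite leNye.
  + by have := H (a - 1); rewrite lte_fin ltrBlDr ltrDl ltr01 leNgt ltNyr => /(_ isT).
  + by have := H 0 (ltry _); rewrite leNgt ltNyr.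
- case: a H => [a| |] H; last by rewrite leNye.
  + rewrite lee_fin; apply/ler_addgt0Pr => e e0.
    have := H (a - e); rewrite lte_fin ltrBlDr ltrDl e0 => /(_ isT).
    by rewrite lee_fin lerBlDr.
  + by have := H (b + 1) (ltry _); rewrite lee_fin -subr_ge0 opprD addrA subrr sub0r oppr_ge0 ler10.
- by rewrite leey.
Qed.

Lemma clf_ge (g : V -> \bar R) x : (g x <= clf g x)%E.
Proof.
rewrite /clf limf_esupE; apply: le_ereal_inf_tmp => _ [A Ax <-].
apply: ereal_sup_ubound; exists x => //; exact: nbhs_singleton.
Qed.

Lemma clf_le (g : V -> \bar R) x (a : \bar R) e : 0 < e ->
  (forall y, ball x e y -> (g y <= a)%E) -> (clf g x <= a)%E.
Proof.
move=> e0 H; rewrite /clf limf_esupE.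
apply: (@le_trans _ _ (ereal_sup (g @` ball x e))).
  apply: ereal_inf_lbound; exists (ball x e) => //; exact: nbhsx_ballx.
by apply: ge_ereal_sup => _ [y By <-]; apply: H.
Qed.

Lemma clf_lb (g : V -> \bar R) x (a : \bar R) :
  (forall e, 0 < e -> forall c : R, (c%:E < a)%E -> exists2 y, ball x e y & (c%:E < g y)%E) ->
  (a <= clf g x)%E.
Proof.
move=> H; rewrite /clf limf_esupE; apply: le_ereal_inf_tmp => _ [A Ax <-].
move/nbhs_ballP: Ax => [e /= e0 eA].
apply: lee_real => c ca; have [y By cy] := H e e0 c ca.
apply: (le_trans (ltW cy)); apply: ereal_sup_ubound; exists y => //; exact: eA.
Qed.

Lemma clf_gt (g : V -> \bar R) x (c : \bar R) : (c < clf g x)%E ->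
  forall e, 0 < e -> exists2 y, ball x e y & (c < g y)%E.
Proof.
move=> cl e e0; apply: contrapT => Hn.
have : (clf g x <= c)%E.
  apply: (@clf_le g x c e e0) => y By; rewrite leNgt; apply/negP => cy; apply: Hn; by exists y.
by rewrite leNgt cl.
Qed.

Lemma clf_concave (g : V -> \bar R) : concave_fun g -> concave_fun (clf g).
Proof.
move=> cg x y a b t /andP[t0 t1] ha hb.
apply: clf_lb => e e0 c; rewrite lte_fin => Hc.
set del := (t * a + (1 - t) * b - c) / 2.
have del0 : 0 < del by rewrite divr_gt0 // subr_gt0.
have hx : ((a - del)%:E < clf g x)%E.
  by apply: lt_le_trans ha; rewrite lte_fin ltrBlDr ltrDl.
have hy : ((b - del)%:E < clf g y)%E.
  by apply: lt_le_trans hb; rewrite lte_fin ltrBlDr ltrDl.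
have [x' bx hx'] := clf_gt hx e0.
have [y' By hy'] := clf_gt hy e0.
exists (t *: x' + (1 - t) *: y').
  move: bx By; rewrite !ballE => bx By.
  rewrite opprD addrACA -!scalerBr.
  apply: le_lt_trans (ler_normD _ _) _; rewrite !mx_normZ !ger0_norm ?subr_ge0 //.
  have [t00|tn0] := eqVneq t 0.
    by rewrite t00 mul0r add0r subr0 mul1r.
  have tp : 0 < t by rewrite lt_neqAle eq_sym tn0 t0.
  have h1 : t * `|x - x'| < t * e by rewrite ltr_pM2l.
  have h2 : (1 - t) * `|y - y'| <= (1 - t) * e by rewrite ler_wpM2l ?subr_ge0 // ltW.
  lra.
apply: lt_le_trans (cg _ _ _ _ _ _ (ltW hx') (ltW hy')); last by rewrite t0 t1.
rewrite lte_fin /del; lra.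
Qed.

Lemma clf_closed (g : V -> \bar R) : closed (hypo (clf g)).
Proof.
move=> [x a] Hcl; rewrite /hypo /=.
apply: clf_lb => e e0 c; rewrite lte_fin => Hc.
set del := Num.min (e / 2) ((a - c) / 2).
have del0 : 0 < del by rewrite lt_min !divr_gt0 // subr_gt0.
have [[x' a'] [hyp [bx ba]]] := Hcl _ (nbhsx_ballx (x, a) _ del0).
rewrite /hypo /= in hyp.
move: bx ba; rewrite ballE -ball_normE /= => bx ba.
have hd1 : del <= e / 2 by rewrite ge_min lexx.
have hd2 : del <= (a - c) / 2 by rewrite ge_min lexx orbT.
have ca : c < a'.
  have := ler_norm (a - a'); lra.
have e2 : 0 < e / 2 by rewrite divr_gt0.
have ca' : (c%:E < a'%:E)%E by rewrite lte_fin.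
have [y By hy] := clf_gt (lt_le_trans ca' hyp) e2.
exists y => //.
rewrite ballE in By; apply/ballE.
have := ler_normD (x - x') (x' - y); rewrite addrA subrK; lra.
Qed.

Lemma clf_scale_le (g : V -> \bar R) t x :
  (forall s y, 0 < s -> g (s *: y) = (s%:E * g y)%E) -> 0 < t ->
  (clf g (t *: x) <= t%:E * clf g x)%E.
Proof.
move=> hom t0; apply: lee_real => c Hc.
have H : ((c / t)%:E <= clf g x)%E.
  apply: clf_lb => e e0 c' Hc'.
  have et0 : 0 < e * t by rewrite mulr_gt0.
  have [y' By' hy'] := clf_gt Hc et0.
  exists (t^-1 *: y').
    move: By'; rewrite !ballE => By'.
    have -> : x - t^-1 *: y' = t^-1 *: (t *: x - y').
      by rewrite scalerBr scalerA mulVf ?lt0r_neq0 // scale1r.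
    rewrite mx_normZ ger0_norm ?invr_ge0 ?ltW //.
    by rewrite ltr_pdivrMl // mulrC.
  apply: lt_trans Hc' _.
  have : (c%:E < t%:E * g (t^-1 *: y'))%E.
    by rewrite -hom // scalerA mulfV ?lt0r_neq0 // scale1r.
  by rewrite -lte_pdivrMl // -EFinM mulrC.
have t0' : (0 <= t%:E)%E by rewrite lee_fin ltW.
apply: le_trans (lee_wpmul2l t0' H).
by rewrite -EFinM mulrCA mulfV ?lt0r_neq0 // mulr1.
Qed.

Lemma clf_scale (g : V -> \bar R) t x :
  (forall s y, 0 < s -> g (s *: y) = (s%:E * g y)%E) -> 0 < t ->
  clf g (t *: x) = (t%:E * clf g x)%E.
Proof.
move=> hom t0; apply/eqP; rewrite eq_le clf_scale_le //=.
have ti0 : 0 < t^-1 by rewrite invr_gt0.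
have := clf_scale_le (t *: x) hom ti0.
rewrite scalerA mulVf ?lt0r_neq0 // scale1r => H.
have t0' : (0 <= t%:E)%E by rewrite lee_fin ltW.
apply: le_trans (lee_wpmul2l t0' H) _.
by rewrite muleA -EFinM mulfV ?lt0r_neq0 // mul1e.
Qed.

Lemma entry_le (w : V) j : `|w 0 j| <= `|w|.
Proof.
have -> : `|w| = mx_norm w by [].
rewrite mx_normrE. exact: (le_bigmax _ (fun ij : 'I_1 * 'I_n => `|w ij.1 ij.2|) (0, j)).
Qed.

Section D.
Variable K : set V.
Hypothesis K0 : K 0.
Hypothesis KD : forall x y, K x -> K y -> K (x + y).
Hypothesis KZ : forall (l : R) x, 0 <= l -> K x -> K (l *: x).

Lemma free_max : exists X : seq V,
  [/\ free X, (forall v, v \in X -> K v) & (forall x, K x -> x \in <<X>>%VS)].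
Proof.
apply: contrapT => H.
suff : forall k, exists X : seq V, [/\ free X, (forall v, v \in X -> K v) & size X = k].
  move=> /(_ n.+1) [X [fX _ sX]].
  have := dimvS (subvf <<X>>%VS); rewrite dimvf dim_matrix mul1r.
  by move/eqP: fX => ->; rewrite sX ltnn.
elim=> [|k [X [fX XK sX]]]; first by exists [::]; split => //; exact: nil_free.
have : ~ (forall x, K x -> x \in <<X>>%VS) by move=> h; apply: H; exists X; split.
move/existsNP => [x /not_implyP [Kx /negP xX]].
exists (x :: X); split; last by rewrite /= sX.
  by rewrite free_cons xX fX.
by move=> v; rewrite in_cons => /orP[/eqP ->|]; [|exact: XK].
Qed.

Lemma coord_bound (m : nat) (T : m.-tuple V) : exists2 C : R, 0 < C &
  forall i w, `|coord T i w| <= C * `|w|.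
Proof.
set S := \sum_(i < m) \sum_(j < n) `|coord T i ('e_j : V)|.
have S0 : 0 <= S by apply: sumr_ge0 => i _; apply: sumr_ge0.
exists (1 + S); first by rewrite ltr_pwDl.
move=> i w.
have -> : coord T i w = \sum_(j < n) w 0 j * coord T i ('e_j : V).
  rewrite {1}(row_sum_delta w) linear_sum; apply: eq_bigr => j _.
  by rewrite linearZ.
apply: le_trans (ler_norm_sum _ _ _) _.
apply: (@le_trans _ _ (\sum_(j < n) `|w| * `|coord T i ('e_j : V)|)).
  apply: ler_sum => j _; rewrite normrM ler_wpM2r //; exact: entry_le.
rewrite -mulr_sumr mulrC ler_wpM2r //.
apply: (@le_trans _ _ S); last by rewrite lerDr.
rewrite /S (bigD1 i) //= lerDl; apply: sumr_ge0 => k _; exact: sumr_ge0.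
Qed.

Lemma relint_exists : exists y, K y /\
  forall x t, K x -> 0 < t <= 1 -> rel_int K (t *: y + (1 - t) *: x).
Proof.
have [X [fX XK KX]] := free_max.
set T := in_tuple X.
have [C C0 HC] := coord_bound T.
set y := \sum_(i < size X) X`_i.
have XiK : forall i : 'I_(size X), K X`_i by move=> i; apply: XK; exact: mem_nth.
have Ky : K y by apply: big_ind => // i _; exact: XiK.
exists y; split => // x t Kx /andP[t0 t1].
have t1' : 0 <= 1 - t by rewrite subr_ge0.
have Kz : K (t *: y + (1 - t) *: x) by apply: KD; apply: KZ => //; exact: ltW.
split => //; exists (t / C); first by rewrite divr_gt0.
move=> w [k [p [wt [pK [_ wE]]]]] bw.
have wX : w \in <<X>>%VS.
  by rewrite wE; apply: memv_suml => i _; apply: memvZ; apply: KX.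
have yX : y \in <<X>>%VS.
  by apply: memv_suml => i _; apply: memv_span; exact: mem_nth.
set z := t *: y + (1 - t) *: x.
have zX : z \in <<X>>%VS by apply: memvD; apply: memvZ => //; exact: KX.
set d := w - z.
have dX : d \in <<X>>%VS by apply: memvB.
have dE := coord_span (X := T) dX.
have wE2 : w = (1 - t) *: x + \sum_(i < size X) (t + coord T i d) *: X`_i.
  rewrite -[w](subrK z) -/d {1}dE /z addrC (addrC (t *: y)) -addrA; congr (_ + _).
  rewrite /y scaler_sumr -big_split /=; apply: eq_bigr => i _.
  by rewrite scalerDl.
have hc : forall i, 0 <= t + coord T i d.
  move=> i; have := HC i d; rewrite ballE -/z distrC -/d in bw.
  have : C * `|d| < t by rewrite mulrC -ltr_pdivlMr.
  have := ler_norm (- coord T i d); rewrite normrN.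
  move=> h1 h2 h3; lra.
rewrite wE2; apply: KD; first exact: KZ.
by apply: big_ind => // i _; apply: KZ => //; exact: XiK.
Qed.
End D.
Section B.
Variable U : set V.
Hypothesis hU : antinorm_set U.
Local Notation g := (nu_ring U).

Lemma U_dist : exists2 d : R, 0 < d & forall u, U u -> d <= `|u|.
Proof.
case: hU => _ Ucl _ _ U0n.
apply: contrapT => H; apply: U0n; apply: Ucl => B /nbhs_ballP [e /= e0 eB].
have : ~ (forall u, U u -> e <= `|u|) by move=> h; apply: H; exists e.
move/existsNP => [u /not_implyP [Uu /negP]]; rewrite -ltNge => ue.
exists u; split => //; apply: eB; rewrite ballE sub0r normrN //.
Qed.

Lemma nu_ring_lb u l : U u -> 0 < l -> (l%:E <= g (l *: u))%E.
Proof.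
move=> Uu l0; apply: ereal_sup_ubound; exists l => //; split => //; by exists u.
Qed.

Lemma nu_ring_ub d : 0 < d -> (forall u, U u -> d <= `|u|) ->
  forall y, (g y <= (`|y| / d)%:E)%E.
Proof.
move=> d0 Hd y; apply: ge_ereal_sup => _ [l [l0 [u Uu ->]] <-].
rewrite lee_fin mx_normZ ger0_norm ?(ltW l0) // ler_pdivlMr //.
by rewrite ler_wpM2l ?(ltW l0) ?Hd.
Qed.

Lemma nu_ring_pos y : (-oo < g y)%E -> (0 < g y)%E.
Proof.
move=> H.
have [[l [l0 [u Uu yE]]]|N] := pselect (exists l, 0 < l /\ exists2 u, U u & y = l *: u).
  rewrite yE; apply: lt_le_trans (nu_ring_lb Uu l0); by rewrite lte_fin.
move: H; rewrite /nu_ring.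
have -> : [set l%:E | l in [set l : R | 0 < l /\ exists2 u, U u & y = l *: u]] = set0.
  apply/seteqP; split => // t [l [l0 [u Uu yE]] _]; apply: N; exists l; split => //; by exists u.
by rewrite ereal_sup0 ltxx.
Qed.

Lemma nu_ring_scale_le t y : 0 < t -> (g (t *: y) <= t%:E * g y)%E.
Proof.
move=> t0; apply: ge_ereal_sup => _ [l [l0 [u Uu E]] <-].
have H : ((l / t)%:E <= g y)%E.
  apply: ereal_sup_ubound; exists (l / t) => //; split; first exact: divr_gt0.
  exists u => //.
  have -> : y = t^-1 *: (t *: y) by rewrite scalerA mulVf ?lt0r_neq0 // scale1r.
  by rewrite E scalerA mulrC.
have -> : l = t * (l / t) by rewrite mulrC divfK ?lt0r_neq0.
have t0' : (0 <= t%:E)%E by rewrite lee_fin ltW.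
by rewrite EFinM; apply: (lee_wpmul2l t0').
Qed.

Lemma nu_ring_scale t y : 0 < t -> g (t *: y) = (t%:E * g y)%E.
Proof.
move=> t0; apply/eqP; rewrite eq_le nu_ring_scale_le //=.
have ti0 : 0 < t^-1 by rewrite invr_gt0.
have := nu_ring_scale_le (t *: y) ti0.
rewrite scalerA mulVf ?lt0r_neq0 // scale1r => H.
have t0' : (0 <= t%:E)%E by rewrite lee_fin ltW.
apply: le_trans (lee_wpmul2l t0' H) _.
by rewrite muleA -EFinM mulfV ?lt0r_neq0 // mul1e.
Qed.

Lemma nu_ring_concave : concave_fun g.
Proof.
move=> x y a b t /andP[t0 t1] ha hb.
case: hU => _ _ Ucv _ _.
apply: lee_real => c; rewrite lte_fin => Hc.
set del := t * a + (1 - t) * b - c.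
have del0 : 0 < del by rewrite subr_gt0.
have : ((a - del)%:E < g x)%E by apply: lt_le_trans ha; rewrite lte_fin ltrBlDr ltrDl.
move/ereal_sup_gt => [_ [l [l0 [u Uu xE]] <-]]; rewrite lte_fin => hl.
have : ((b - del)%:E < g y)%E by apply: lt_le_trans hb; rewrite lte_fin ltrBlDr ltrDl.
move/ereal_sup_gt => [_ [m [m0 [v Uv yE]] <-]]; rewrite lte_fin => hm.
set L := t * l + (1 - t) * m.
have t1' : 0 <= 1 - t by rewrite subr_ge0.
have L0 : 0 < L.
  have [t00|tn0] := eqVneq t 0; first by rewrite /L t00 mul0r add0r subr0 mul1r.
  have tp : 0 < t by rewrite lt_neqAle eq_sym tn0 t0.
  apply: (@lt_le_trans _ _ (t * l)); first exact: mulr_gt0.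
  by rewrite /L lerDl mulr_ge0 // ltW.
have p0 : 0 <= t * l / L by rewrite divr_ge0 // ?mulr_ge0 // ltW.
have p1 : t * l / L <= 1.
  by rewrite ler_pdivrMr // mul1r /L lerDl mulr_ge0 // ltW.
have := Ucv u v (Itv01 p0 p1) (mem_set Uu) (mem_set Uv) => /set_mem /= Uw.
have zE : t *: x + (1 - t) *: y = L *: ((t * l / L) *: u + (1 - t * l / L) *: v).
  rewrite xE yE scalerDr !scalerA; congr (_ *: _ + _ *: _).
    by rewrite mulrCA mulfV ?lt0r_neq0 // mulr1.
  rewrite /L; field; rewrite -/L; exact: lt0r_neq0.
rewrite zE; apply: le_trans (nu_ring_lb Uw L0); rewrite lee_fin.
have h1 : t * (a - del) <= t * l by rewrite ler_wpM2l // ltW.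
have h2 : (1 - t) * (b - del) <= (1 - t) * m by rewrite ler_wpM2l // ltW.
rewrite /L /del in h1 h2 *; lra.
Qed.

Local Notation G := (clf g).

Lemma G_fin x : G x != +oo%E.
Proof.
have [d d0 Hd] := U_dist.
have H : (G x <= ((`|x| + 1) / d)%:E)%E.
  apply: (clf_le ltr01) => y By.
  apply: le_trans (nu_ring_ub d0 Hd y) _.
  rewrite lee_fin ler_pM2r ?invr_gt0 //.
  move: By; rewrite ballE => By.
  have := ler_normD x (y - x); rewrite addrC subrK distrC; lra.
by rewrite lt_eqF // (le_lt_trans H) ?ltry.
Qed.

Lemma G_ge0 z : G z != -oo%E -> (0 <= G z)%E.
Proof.
move=> Hz; apply: clf_lb => e e0 c; rewrite lte_fin => c0.
have Hz' : (-oo < G z)%E by rewrite lt_neqAle eq_sym Hz leNye.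
have [y By hy] := clf_gt Hz' e0.
exists y => //; apply: lt_trans (nu_ring_pos hy); by rewrite lte_fin.
Qed.

Lemma G0 : G 0 = 0%E.
Proof.
have [d d0 Hd] := U_dist.
case: hU => [[u Uu] _ _ _ _].
apply/eqP; rewrite eq_le; apply/andP; split.
  apply: lee_real => c Hc; rewrite lee_fin leNgt; apply/negP => c0.
  have : (G 0 <= c%:E)%E.
    apply: (clf_le (mulr_gt0 c0 d0)) => y By.
    apply: le_trans (nu_ring_ub d0 Hd y) _; rewrite lee_fin ler_pdivrMr //.
    by move: By; rewrite ballE sub0r normrN => /ltW.
  by rewrite leNgt Hc.
apply: clf_lb => e e0 c; rewrite lte_fin => c0.
set s := e / (`|u| + 1).
have s0 : 0 < s by rewrite divr_gt0 // ltr_wpDl.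
exists (s *: u).
  rewrite ballE sub0r normrN mx_normZ ger0_norm ?ltW // /s.
  rewrite -mulrA gtr_pMr // mulrC ltr_pdivrMr ?ltr_wpDl // mul1r; lra.
apply: lt_le_trans (nu_ring_lb Uu s0); rewrite lte_fin; lra.
Qed.

Lemma G_hom (l : R) x : 0 <= l -> G (l *: x) = (l%:E * G x)%E.
Proof.
rewrite le_eqVlt => /orP[/eqP <-|l0]; first by rewrite scale0r G0 mul0e.
by apply: clf_scale => // s y s0; apply: nu_ring_scale.
Qed.

Lemma G_lb x : (g x <= G x)%E.
Proof. exact: clf_ge. Qed.

Lemma G_U : Uof G = U.
Proof.
case: hU => _ Ucl _ Usc _.
apply/seteqP; split => x; rewrite /Uof /=; last first.
  move=> Ux; apply: le_trans (G_lb x); rewrite -[x in g x]scale1r.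
  exact: nu_ring_lb.
move=> Hx; apply: Ucl => B /nbhs_ballP [e /= e0 eB].
set eps := e / (2 * (`|x| + 1)).
have eps0 : 0 < eps by rewrite divr_gt0 // mulr_gt0 // ltr_wpDl.
have e2 : 0 < e / 2 by rewrite divr_gt0.
have H1 : (1%:E < G ((1 + eps) *: x))%E.
  rewrite G_hom ?addr_ge0 ?ltW //.
  apply: (@lt_le_trans _ _ ((1 + eps)%:E * 1%:E)%E).
    by rewrite -EFinM mulr1 lte_fin ltrDl.
  by apply: lee_wpmul2l => //; rewrite lee_fin addr_ge0 ?ltW.
have [y By hy] := clf_gt H1 e2.
have [_ [l [l0 [v Uv yE]] <-]] := ereal_sup_gt hy.
rewrite lte_fin => l1.
exists y; split; first by rewrite yE; apply: Usc => //; exact: ltW.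
apply: eB; move: By; rewrite !ballE => By.
have -> : x - y = ((1 + eps) *: x - y) - eps *: x.
  by rewrite scalerDl scale1r addrAC addrK.
apply: le_lt_trans (ler_normB _ _) _.
rewrite mx_normZ ger0_norm ?ltW //.
have : eps * `|x| <= e / 2.
  rewrite /eps mulrAC ler_pdivrMr ?mulr_gt0 ?ltr_wpDl //.
  have -> : e / 2 * (2 * (`|x| + 1)) = e * (`|x| + 1) by field.
  rewrite ler_pM2l //; lra.
lra.
Qed.

Lemma G_relint x : rel_int (dom G) x -> (0 < G x)%E.
Proof.
move=> [domx [e e0 He]].
case: hU => [[u Uu] _ _ _ _].
have Gu : (1 <= G u)%E.
  by apply: le_trans (G_lb u); rewrite -[u in g u]scale1r; exact: nu_ring_lb.
have domu : dom G u by rewrite /dom /= gt_eqF // (lt_le_trans _ Gu) ?ltNyr.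
set t := e / (`|x - u| + e).
have t0 : 0 < t by rewrite divr_gt0 // ltr_wpDl.
set z := x + t *: (x - u).
have affz : aff_hull (dom G) z.
  exists 2, (fun i : 'I_2 => if i == ord0 then x else u),
    (fun i : 'I_2 => if i == ord0 then 1 + t else - t).
  split; first by move=> i; case: ifP.
  split; rewrite !big_ord_recl big_ord0 /=.
    by rewrite addr0 addrK.
  by rewrite addr0 scalerDl scale1r scaleNr /z scalerBr addrA.
have bz : ball x e z.
  rewrite ballE /z opprD addrA subrr add0r normrN mx_normZ ger0_norm ?ltW //.
  rewrite /t mulrAC ltr_pdivrMr ?ltr_wpDl // ltr_pM2l //; lra.
have Gz := G_ge0 (He z affz bz).
set s := (1 + t)^-1.
have s0 : 0 < s by rewrite invr_gt0 ltr_wpDl.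
have s1 : s < 1.
  by rewrite invf_lt1; [rewrite ltrDl | rewrite ltr_wpDl].

have := clf_concave nu_ring_concave (t := s) (a := 0) (b := 1) _ Gz Gu.
rewrite (ltW s0) (ltW s1) => /(_ isT).
have -> : s *: z + (1 - s) *: u = x.
  rewrite /z scalerDr scalerA.
  have -> : s * t = 1 - s by rewrite /s; field; rewrite gt_eqF // ltr_wpDl.
  by rewrite scalerBr -addrA subrK -scalerDl addrC subrK scale1r.
apply: lt_le_trans; rewrite lte_fin mulr0 add0r mulr1 subr_gt0 //.
Qed.

Lemma dir2 : antinorm (nuof U) /\ Uof (nuof U) = U.
Proof.
split; last exact: G_U.
split; first exact: G_fin.
split.
- exact: clf_concave nu_ring_concave.
- exact: clf_closed.
- exact: G_hom.
- case: hU => [[u Uu] _ _ _ _]; exists u.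
  have Gu : (1 <= G u)%E.
    by apply: le_trans (G_lb u); rewrite -[u in g u]scale1r; exact: nu_ring_lb.
  by rewrite /dom /= gt_eqF // (lt_le_trans _ Gu) ?ltNyr.
- exact: G_relint.
Qed.

End B.

Section C.
Variable nu : V -> \bar R.
Hypothesis hnu : antinorm nu.

Let nu_fin x : nu x != +oo%E.
Proof. by case: hnu. Qed.
Let nu_conc : concave_fun nu.
Proof. by case: hnu => _ []. Qed.
Let nu_clo : closed (hypo nu).
Proof. by case: hnu => _ []. Qed.
Let nu_hom (l : R) x : 0 <= l -> nu (l *: x) = (l%:E * nu x)%E.
Proof. by case: hnu => _ [] _ _ h _ _; apply: h. Qed.
Let nu_pos x : rel_int (dom nu) x -> (0 < nu x)%E.
Proof. by case: hnu => _ [] _ _ _ _ h; apply: h. Qed.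

Lemma nu0 : nu 0 = 0%E.
Proof.
case: hnu => _ [] _ _ _ [x0 _] _.
by rewrite -(scale0r x0) nu_hom // mul0e.
Qed.

Lemma nu_real x : nu x != -oo%E -> nu x = (fine (nu x))%:E.
Proof. by move=> h; rewrite fineK // fin_numE h nu_fin. Qed.

Lemma ninfty_of (a : R) x : (a%:E <= nu x)%E -> nu x != -oo%E.
Proof. by move=> h; rewrite gt_eqF // (lt_le_trans _ h) ?ltNyr. Qed.

Lemma domZ (l : R) x : 0 <= l -> dom nu x -> dom nu (l *: x).
Proof.
move=> l0 dx; rewrite /dom /= nu_hom // (nu_real dx) -EFinM.
by rewrite gt_eqF ?ltNyr.
Qed.

Lemma domD x y : dom nu x -> dom nu y -> dom nu (x + y).
Proof.
move=> dx dy.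
have h2 : 0 <= (2^-1 : R) <= 1.
  by apply/andP; split; [rewrite invr_ge0 ler0n | rewrite invf_le1 ?ler1n].

have ha : ((fine (nu x))%:E <= nu x)%E by rewrite -nu_real.
have hb : ((fine (nu y))%:E <= nu y)%E by rewrite -nu_real.
have /ninfty_of hm := nu_conc h2 ha hb.
have -> : x + y = 2 *: (2^-1 *: x + (1 - 2^-1) *: y).
  rewrite scalerDr !scalerA mulfV // (_ : 2 * (1 - 2^-1) = 1 :> R) ?scale1r //.
  by field.
by apply: domZ.
Qed.

Lemma nu_usc x (c : R) :
  (forall e, 0 < e -> exists2 y, ball x e y & (c%:E <= nu y)%E) -> (c%:E <= nu x)%E.
Proof.
move=> H; have : hypo nu (x, c).
  apply: nu_clo => B /nbhs_ballP [e /= e0 eB].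
  have [y By hy] := H e e0.
  exists (y, c); split => //; apply: eB; split; [exact: By | exact: ballxx].
by [].
Qed.

Lemma relint_nu : exists y, dom nu y /\
  forall x t, dom nu x -> 0 < t <= 1 -> rel_int (dom nu) (t *: y + (1 - t) *: x).
Proof.
apply: relint_exists.
- by rewrite /dom /= nu0.
- exact: domD.
- by move=> l x l0 dx; apply: domZ.
Qed.

Lemma y0_pos : exists y0, [/\ dom nu y0, (0 < nu y0)%E &
  forall x t, dom nu x -> 0 < t <= 1 -> (0 < nu (t *: y0 + (1 - t) *: x))%E].
Proof.
have [y0 [dy0 Hy0]] := relint_nu.
exists y0; split => //; last by move=> x t dx ht; apply: nu_pos; apply: Hy0.
have := nu_pos (Hy0 y0 1 dy0 _); rewrite lexx ltr01 => /(_ isT).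
by rewrite scale1r subrr scale0r addr0.
Qed.

Lemma Unu_set : antinorm_set (Uof nu).
Proof.
have [y0 [dy0 py0 _]] := y0_pos.
split.
- set r := fine (nu y0).
  have ry : nu y0 = r%:E by rewrite nu_real.
  have r0 : 0 < r by rewrite -lte_fin -ry.
  have ri : 0 <= r^-1 by rewrite invr_ge0 ltW.
  exists (r^-1 *: y0); rewrite /Uof /= (nu_hom _ ri) ry -EFinM.
  by rewrite mulVf ?lt0r_neq0.
- move=> x Hcl; rewrite /Uof /=; apply: nu_usc => e e0.
  have [y [Uy By]] := Hcl _ (nbhsx_ballx x _ e0).
  by exists y.
- move=> x y l /set_mem hx /set_mem hy; apply/mem_set.
  have hl : 0 <= l%:num <= 1 by rewrite ge0 le1.
  have := nu_conc hl hx hy.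
  by rewrite !mulr1 subrKC.
- move=> l u l1 Uu; rewrite /Uof /= nu_hom ?(le_trans ler01) //.
  apply: (@le_trans _ _ (l%:E * 1%:E)%E); first by rewrite -EFinM mulr1 lee_fin.
  by apply: lee_wpmul2l => //; rewrite lee_fin (le_trans ler01).
- by rewrite /Uof /= nu0 lee_fin ler10.
Qed.

Local Notation g := (nu_ring (Uof nu)).

Lemma g_le z : (g z <= nu z)%E.
Proof.
apply: ge_ereal_sup => _ [l [l0 [u Uu ->]] <-].
rewrite (nu_hom _ (ltW l0)).
apply: (@le_trans _ _ (l%:E * 1%:E)%E); first by rewrite -EFinM mulr1.
by apply: lee_wpmul2l => //; rewrite lee_fin ltW.
Qed.

Lemma g_eq z : (0 < nu z)%E -> g z = nu z.
Proof.
move=> pz; apply/eqP; rewrite eq_le g_le /=.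
have dz : nu z != -oo%E by rewrite gt_eqF // (lt_trans _ pz) ?ltNyr.
set r := fine (nu z).
have rz : nu z = r%:E by rewrite nu_real.
have r0 : 0 < r by rewrite -lte_fin -rz.
rewrite rz; apply: ereal_sup_ubound; exists r => //; split => //.
exists (r^-1 *: z); last by rewrite scalerA mulfV ?lt0r_neq0 // scale1r.
have ri : 0 <= r^-1 by rewrite invr_ge0 ltW.
rewrite /Uof /= (nu_hom _ ri) rz -EFinM.
by rewrite mulVf ?lt0r_neq0.
Qed.

Lemma nuof_Unu : nuof (Uof nu) = nu.
Proof.
have [y0 [dy0 py0 Hy0]] := y0_pos.
apply: funext => x; rewrite /nuof; apply/eqP; rewrite eq_le; apply/andP; split.
  apply: lee_real => c Hc; apply: nu_usc => e e0.
  have [y By hy] := clf_gt Hc e0.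
  by exists y => //; apply: ltW; apply: lt_le_trans hy (g_le y).
have [nxm|dx] := eqVneq (nu x) -oo%E; first by rewrite nxm leNye.
have [px|npx] := ltP 0%E (nu x).
  by rewrite -g_eq //; exact: clf_ge.
apply: clf_lb => e e0 c Hc.
set t := e / (`|x - y0| + e).
have t0 : 0 < t by rewrite divr_gt0 // ltr_wpDl.
have t1 : t <= 1 by rewrite ler_pdivrMr ?ltr_wpDl // mul1r lerDr.
have ht : 0 < t <= 1 by rewrite t0 t1.
have pz := Hy0 x t dx ht.
exists (t *: y0 + (1 - t) *: x).
  rewrite ballE.
  have -> : x - (t *: y0 + (1 - t) *: x) = t *: (x - y0).
    by rewrite scalerBl scale1r scalerBr opprD addrA opprB addrC addrA subrK.
  rewrite mx_normZ ger0_norm ?ltW // /t mulrAC ltr_pdivrMr ?ltr_wpDl //.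
  rewrite ltr_pM2l //; lra.
rewrite g_eq //; apply: lt_trans pz; exact: lt_le_trans Hc npx.
Qed.

Lemma dir1 : antinorm_set (Uof nu) /\ nuof (Uof nu) = nu.
Proof. split; [exact: Unu_set | exact: nuof_Unu]. Qed.
End C.

End A.

Theorem lemma1 (R : realType) (n : nat) :
  (forall nu : 'rV[R]_n -> \bar R, antinorm nu ->
     antinorm_set (Uof nu) /\ nuof (Uof nu) = nu) /\
  (forall U : set 'rV[R]_n, antinorm_set U ->
     antinorm (nuof U) /\ Uof (nuof U) = U).
Proof.
split.
- move=> nu hnu; exact: dir1 hnu.
- move=> U hU; exact: dir2 hU.
Qed.
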